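(* Let $\mathcal{A}=(Q,\delta,I,F)$ be a complete Büchi automaton with $n=|Q|$, let $\mathcal{B}_S=(Q',\delta',I',F')$ be the automaton produced from $\mathcal{A}$ by Schewe's rank-based complementation construction (described in the context), and let $\mathcal{B}_S^{\mathit{di}}$ be the automaton obtained from the same construction in which every occurrence of $Q_2$ (in the state set, in the transition functions $\delta_2,\delta_3$ and in the accepting set) is replaced by $$Q_2^{\mathit{di}} = Q_2\setminus\{(S,O,f,i)\in Q_2 \mid \exists p,q\in S:\ p\preceq_{\mathit{di}} q \wedge f(p)>f(q)\}.$$ Then $\mathcal{L}(\mathcal{B}_S^{\mathit{di}})=\mathcal{L}(\mathcal{B}_S)$.
   Context: Fix a finite nonempty alphabet $\Sigma$. A Büchi automaton (BA) is $\mathcal{A}=(Q,\delta,I,F)$ with finite state set $Q$, transition function $\delta:Q\times\Sigma\to 2^Q$, initial states $I\subseteq Q$ and accepting states $F\subseteq Q$; it is complete if $\delta(q,a)\neq\emptyset$ for all $q,a$. We write $p\xrightarrow{a}q\in\delta$ for $q\in\delta(p,a)$ and $\delta(P,a)=\bigcup_{p\in P}\delta(p,a)$. A run from $q$ on an infinite word $\alpha=\alpha_0\alpha_1\cdots$ is a sequence $\rho_0\rho_1\cdots$ of states with $\rho_0=q$ and $\rho_{i+1}\in\delta(\rho_i,\alpha_i)$; it is accepting if some state of $F$ occurs infinitely often. $\mathcal{L}(\mathcal{A})$ is the set of infinite words having an accepting run from some initial state. A trace over $\alpha$ is a sequence $q_0\xrightarrow{\alpha_0}q_1\xrightarrow{\alpha_1}\cdots$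 where $q_0q_1\cdots$ is a run over $\alpha$. Direct simulation: in the simulation game from $(p_0,r_0)$, in round $i$ Spoiler picks a transition $p_i\xrightarrow{\alpha_i}p_{i+1}$ and Duplicator answers with $r_i\xrightarrow{\alpha_i}r_{i+1}$ on the same symbol; a Duplicator strategy is a map $\sigma$ with $\sigma(r,p\xrightarrow{a}p')\in\delta(r,a)$ (no lookahead). For the resulting traces $\pi_p=p_0\xrightarrow{\alpha_0}p_1\cdots$ and $\pi_r=r_0\xrightarrow{\alpha_0}r_1\cdots$, Duplicator wins the direct game if for all $i$, $p_i\in F$ implies $r_i\in F$. The (maximal) direct simulation $\preceq_{\mathit{di}}$ is defined by $p\preceq_{\mathit{di}}r$ iff Duplicator has a winning strategy from $(p,r)$. Schewe's construction. A (level) ranking is $f:Q\to\{0,1,\dots,2n\}$ with $f(q)$ even for all $q\in F$; $\mathrm{rank}(f)=\max_{q\in Q}f(q)$. For $S\subseteq Q$, $f$ is $S$-tight if (i) $\mathrm{rank}(f)=r$ is odd, (ii) $\{f(s)\mid s\in S\}\supseteq\{1,3,\dots,r\}$, and (iii) $\{f(q)\mid q\notin S\}=\{0\}$; $\mathcal{T}$ is the set of $Q$-tight rankings. The BA $\mathcal{B}_S=(Q',\delta',I',F')$ has: $Q'=Q_1\cup Q_2$ with $Q_1=2^Q$ and $Q_2=\{(S,O,f,i)\in 2^Q\times2^Q\times\mathcal{T}\times\{0,2,\dots,2n-2\}\mid f \text{ is } S\text{-tight},\ O\subseteq S\cap f^{-1}(i)\}$; $I'=\{I\}$; $\delta'=\delta_1\cup\delta_2\cup\delta_3$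 where $\delta_1(S,a)=\{\delta(S,a)\}\subseteq Q_1$ for $S\in Q_1$; $\delta_2(S,a)=\{(S',\emptyset,f,0)\in Q_2\mid S'=\delta(S,a),\ f \text{ is } S'\text{-tight}\}$ for $S\in Q_1$; and for $(S,O,f,i)\in Q_2$, $(S',O',f',i')\in\delta_3((S,O,f,i),a)$ iff $(S',O',f',i')\in Q_2$, $S'=\delta(S,a)$, $f'(q')\le f(q)$ for all $q\in S$ and $q'\in\delta(q,a)$, $\mathrm{rank}(f)=\mathrm{rank}(f')$, $f'$ is $S'$-tight, and either ($O=\emptyset$, $i'=(i+2)\bmod(\mathrm{rank}(f')+1)$ and $O'=f'^{-1}(i')$) or ($O\neq\emptyset$, $i'=i$ and $O'=\delta(O,a)\cap f'^{-1}(i)$); and $F'=\{\emptyset\}\cup\{(S,\emptyset,f,i)\in Q_2\}$. *)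

(* Defs.v *)
From mathcomp Require Import all_boot.
Set Implicit Arguments. Unset Strict Implicit. Unset Printing Implicit Defensive.

Record buchi (Sigma : finType) := Buchi {
  bst : finType;
  bdelta : bst -> Sigma -> {set bst};
  binit : {set bst};
  bfin : {set bst} }.

Definition word (Sigma : finType) := nat -> Sigma.

Definition complete (Sigma : finType) (A : buchi Sigma) : Prop :=
  forall (q : bst A) (a : Sigma), bdelta q a != set0.

Definition is_run (Sigma : finType) (A : buchi Sigma) (q : bst A) (alpha : word Sigma)
  (rho : nat -> bst A) : Prop :=
  rho 0 = q /\ forall i, rho i.+1 \in bdelta (rho i) (alpha i).

Record rbuchi (Sigma : finType) := RBuchi {
  rst : Type;
  rtrans : rst -> Sigma -> rst -> Prop;
  rinit : rst -> Prop;
  racc : rst -> Prop }.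

Definition rlang (Sigma : finType) (B : rbuchi Sigma) (alpha : word Sigma) : Prop :=
  exists rho : nat -> rst B,
    @rinit _ B (rho 0) /\ (forall i, @rtrans _ B (rho i) (alpha i) (rho i.+1)) /\
    (forall N, exists m, N <= m /\ @racc _ B (rho m)).

Section Construction.
Variables (Sigma : finType) (A : buchi Sigma).
Local Notation Q := (bst A).
Local Notation delta := (@bdelta _ A).
Local Notation F := (bfin A).

(* a Duplicator strategy: sigma r p a p' is Duplicator's answer from r to
   Spoiler's transition p -a-> p' *)
Definition strategy := Q -> Q -> Sigma -> Q -> Q.

Definition valid_strategy (sg : strategy) : Prop :=
  forall r p a p', p' \in delta p a -> sg r p a p' \in delta r a.

Fixpoint dup_trace (sg : strategy) (r0 : Q) (alpha : word Sigma) (pi : nat -> Q)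
  (i : nat) : Q :=
  match i with
  | 0 => r0
  | k.+1 => sg (dup_trace sg r0 alpha pi k) (pi k) (alpha k) (pi k.+1)
  end.

Definition di_sim (p r : Q) : Prop :=
  exists sg : strategy, valid_strategy sg /\
    forall (alpha : word Sigma) (pi : nat -> Q), is_run p alpha pi ->
      forall i, pi i \in F -> dup_trace sg r alpha pi i \in F.

Definition nQ : nat := #|Q|.

Definition ranking (f : {ffun Q -> nat}) : Prop :=
  (forall q, f q <= 2 * nQ) /\ (forall q, q \in F -> ~~ odd (f q)).

Definition rank (f : {ffun Q -> nat}) : nat := \max_(q : Q) f q.

Definition tight (S : {set Q}) (f : {ffun Q -> nat}) : Prop :=
  [/\ odd (rank f),
      (forall k, odd k -> k <= rank f -> exists2 s, s \in S & f s = k)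
    & (forall q, q \notin S -> f q = 0)].

Definition inT (f : {ffun Q -> nat}) : Prop := ranking f /\ tight [set: Q] f.

Definition preimg (f : {ffun Q -> nat}) (k : nat) : {set Q} := [set q | f q == k].

Definition Q2state : Type := ({set Q} * {set Q} * {ffun Q -> nat} * nat)%type.

Definition inQ2 (x : Q2state) : Prop :=
  let: (S1, O1, f, i) := x in
  [/\ inT f, tight S1 f, ~~ odd i, i.+2 <= 2 * nQ & O1 \subset S1 :&: preimg f i].

Definition inQ2di (x : Q2state) : Prop :=
  inQ2 x /\
  let: (S1, O1, f, i) := x in
  ~ (exists p q, [/\ p \in S1, q \in S1, di_sim p q & f q < f p]).

Definition post (S1 : {set Q}) (a : Sigma) : {set Q} := \bigcup_(q in S1) delta q a.

Definition sstate : Type := ({set Q} + Q2state)%type.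

Definition strans (P : Q2state -> Prop) (x : sstate) (a : Sigma) (y : sstate) : Prop :=
  match x, y with
  | inl S1, inl S2 => S2 = post S1 a
  | inl S1, inr (S2, O2, f, i) =>
      P (S2, O2, f, i) /\ S2 = post S1 a /\ O2 = set0 /\ i = 0 /\ tight S2 f
  | inr (S1, O1, f, i), inr (S2, O2, f', i') =>
      P (S1, O1, f, i) /\ P (S2, O2, f', i') /\ S2 = post S1 a /\
          (forall q q', q \in S1 -> q' \in delta q a -> f' q' <= f q) /\
          rank f = rank f' /\ tight S2 f' /\
          (
          (O1 = set0 /\ i' = (i + 2) %% (rank f').+1 /\ O2 = S2 :&: preimg f' i')
          \/ (O1 != set0 /\ i' = i /\ O2 = post O1 a :&: preimg f' i))
  | inr _, inl _ => False
  end.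

Definition sinit (x : sstate) : Prop := x = inl (binit A).

Definition sacc (P : Q2state -> Prop) (x : sstate) : Prop :=
  x = inl set0 \/
  exists S1 f i, x = inr (S1, set0, f, i) /\ P (S1, set0, f, i).

Definition schewe (P : Q2state -> Prop) : rbuchi Sigma :=
  @RBuchi Sigma sstate (strans P) sinit (sacc P).

Definition B_S : rbuchi Sigma := schewe inQ2.
Definition B_S_di : rbuchi Sigma := schewe inQ2di.

End Construction.

(* Main.v *)
Require Import Defs.
From mathcomp Require Import all_boot.
From Stdlib Require Classical ClassicalEpsilon.
Set Implicit Arguments. Unset Strict Implicit. Unset Printing Implicit Defensive.

Definition pdec (P : Prop) : bool :=
  if ClassicalEpsilon.excluded_middle_informative P then true else false.
Lemma pdecP P : reflect P (pdec P).
Proof. by rewrite /pdec; case: ClassicalEpsilon.excluded_middle_informative => h; constructor. Qed.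

Lemma NNPP' (P : Prop) : ~ ~ P -> P.
Proof. exact: Classical_Prop.NNPP. Qed.

Section Main.
Variables (Sigma : finType) (A : buchi Sigma).
Local Notation Q := (bst A).
Local Notation delta := (@bdelta _ A).
Local Notation F := (bfin A).
Hypothesis Acomp : complete A.
Variable alpha : word Sigma.

Lemma sim_step p q a p' : di_sim p q -> p' \in delta p a ->
  exists2 q', q' \in delta q a & di_sim p' q'.
Proof.
case=> sg [vsg win] hp'.
exists (sg q p a p'); first exact: vsg.
exists sg; split => // al pi [pi0 pis] i hi.
pose al2 := fun k => if k is k'.+1 then al k' else a.
pose pi2 := fun k => if k is k'.+1 then pi k' else p.
have run2 : is_run p al2 pi2.
  by split => // -[|k] /=; [rewrite pi0 | exact: pis].
have eq2 : forall k, dup_trace sg q al2 pi2 k.+1 = dup_trace sg (sg q p a p') al pi k.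
  elim=> [|k IH]; first by rewrite /= pi0.
  transitivity (sg (dup_trace sg q al2 pi2 k.+1) (pi k) (al k) (pi k.+1)) => //.
  by rewrite IH.
by rewrite -eq2; apply: win run2 _ _.
Qed.

Fixpoint somerun (p : Q) (k : nat) : Q :=
  if k is k'.+1 then odflt p [pick x in delta (somerun p k') (alpha k')] else p.

Lemma somerunP p : is_run p alpha (somerun p).
Proof.
split => // k /=; case: pickP => [x hx|h] //=.
have := Acomp (somerun p k) (alpha k); case/set0Pn => x; by rewrite h.
Qed.

Lemma sim_F p q : di_sim p q -> p \in F -> q \in F.
Proof. by case=> sg [_ win] hp; exact: (win alpha _ (somerunP p) 0). Qed.

Fixpoint Sj (j : nat) : {set Q} := if j is j'.+1 then post (Sj j') (alpha j') else binit A.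

Inductive reach (H : Q -> nat -> Prop) (q : Q) (j : nat) : Q -> nat -> Prop :=
| reach0 : H q j -> reach H q j q j
| reachS x y x' : reach H q j x y -> x' \in delta x (alpha y) -> H x' y.+1 ->
    reach H q j x' y.+1.

Lemma reach_H H q j x y : reach H q j x y -> H q j /\ H x y.
Proof. by elim=> // x0 y0 x' _ [] ? _ _ ?. Qed.

Lemma reach_le H q j x y : reach H q j x y -> j <= y.
Proof. by elim=> // x0 y0 x' _ ? _ _; apply: leqW. Qed.

Lemma reach_str (H1 H2 : Q -> nat -> Prop) q j :
  (forall x y, reach H1 q j x y -> H2 x y) ->
  forall x y, reach H1 q j x y -> reach H2 q j x y.
Proof.
move=> hH x y r; elim: r hH => [h0|x0 y0 x' r IH e hx] hH.
  by apply: reach0; apply: hH; apply: reach0.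
exact: (reachS (IH hH) e (hH _ _ (reachS r e hx))).
Qed.

Lemma reach_mono (H1 H2 : Q -> nat -> Prop) q j x y :
  (forall x y, H1 x y -> H2 x y) -> reach H1 q j x y -> reach H2 q j x y.
Proof.
move=> hH; apply: reach_str => x0 y0 r; apply: hH; exact: (reach_H r).2.
Qed.

Lemma reach_cons H q j q' x y : H q j -> q' \in delta q (alpha j) ->
  reach H q' j.+1 x y -> reach H q j x y.
Proof.
move=> hq e r; elim: r => [h0|x0 y0 x' r IH e' hx].
  exact: reachS (reach0 hq) e h0.
exact: reachS IH e' hx.
Qed.

Lemma reach_front H q j x y : reach H q j x y ->
  (x = q /\ y = j) \/ exists2 q', q' \in delta q (alpha j) & reach H q' j.+1 x y.
Proof.
elim=> [h0|x0 y0 x' r [[-> ->]|[q' e r']] e' hx]; first by left.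
  by right; exists x' => //; apply: reach0.
by right; exists q' => //; apply: reachS r' e' hx.
Qed.

Lemma reach_prefix H q j x y z : reach H q j x y -> j <= z <= y ->
  exists x', reach H q j x' z.
Proof.
elim=> [h0|x0 y0 x' r IH e hx].
  move=> hz; have -> : z = j by apply/eqP; rewrite eqn_leq andbC.
  by exists q; apply: reach0.
move=> /andP[hjz]; rewrite leq_eqVlt => /orP[/eqP ->|hz].
  by exists x'; apply: reachS r e hx.
by apply: IH; rewrite hjz.
Qed.

Lemma reach_back H q j x y : reach H q j x y.+1 -> j <= y ->
  exists2 x', reach H q j x' y & x \in delta x' (alpha y).
Proof.
move=> r hjy.
have gen : forall x0 z, reach H q j x0 z -> z = y.+1 ->
    exists2 x', reach H q j x' y & x0 \in delta x' (alpha y).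
  move=> x0 z; case=> [h0 ez|x1 y1 x' r1 e hx [ey]].
    by move: hjy; rewrite ez ltnn.
  by exists x1; rewrite -ey.
exact: gen r erefl.
Qed.

Definition G0 (b : nat) (q : Q) (j : nat) : Prop := b <= j /\ q \in Sj j.
Definition bounded (H : Q -> nat -> Prop) q j :=
  exists N, forall x y, reach H q j x y -> y < N.
Definition Ffree (H : Q -> nat -> Prop) q j :=
  forall x y, reach H q j x y -> x \notin F.

Lemma Sj_edge j q q' : q \in Sj j -> q' \in delta q (alpha j) -> q' \in Sj j.+1.
Proof. by move=> hq hq'; apply/bigcupP; exists q. Qed.

Lemma Sj_parent j q' : q' \in Sj j.+1 -> exists2 q, q \in Sj j & q' \in delta q (alpha j).
Proof. by move/bigcupP. Qed.

Lemma post_sub (O S : {set Q}) a : O \subset S -> post O a \subset post S a.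
Proof.
move=> hOS; apply/subsetP => x /bigcupP [q hq hx]; apply/bigcupP; exists q => //.
exact: (subsetP hOS).
Qed.

Lemma stab (f : nat -> nat) b0 : (forall j, b0 <= j -> f j.+1 <= f j) ->
  exists2 m, b0 <= m & forall j, m <= j -> f j = f m.
Proof.
move=> hf.
have mono : forall b1 j, b0 <= b1 -> b1 <= j -> f j <= f b1.
  move=> b1 j h1; elim: j => [|j IH]; first by rewrite leqn0 => /eqP->.
  rewrite leq_eqVlt => /orP[/eqP<-//|]; rewrite ltnS => hj.
  apply: leq_trans (IH hj); apply: hf; exact: leq_trans hj.
suff: forall n b1, b0 <= b1 -> f b1 <= n -> exists2 m, b0 <= m & forall j, m <= j -> f j = f m.
  by move/(_ (f b0) b0 (leqnn _) (leqnn _)).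
elim=> [|n IH] b1 hb1 hn.
  exists b1 => // j hj; apply/eqP; rewrite eqn_leq mono //=.
  by apply: leq_trans hn _.
case: (Classical_Prop.classic (forall j, b1 <= j -> f j = f b1)) => hall.
  by exists b1.
apply: NNPP' => hno; apply: hall => j hj; apply: NNPP' => hne; apply: hno.
apply: (IH j (leq_trans hb1 hj)).
have : f j < f b1 by rewrite ltn_neqAle (mono _ _ hb1 hj) andbT; apply/eqP.
by move=> h; rewrite -ltnS; apply: leq_trans h hn.
Qed.

Section DAG.
Variable b : nat.
Variable phi : nat -> {ffun Q -> nat}.
Hypothesis P1 : forall q q' j, b <= j -> q \in Sj j -> q' \in delta q (alpha j) ->
  phi j.+1 q' <= phi j q.
Hypothesis P2 : forall q j, b <= j -> q \in F -> ~~ odd (phi j q).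
Hypothesis P4 : forall q j, b <= j -> phi j q <= 2 * nQ A.
Hypothesis P3 : forall q j, G0 b q j -> ~~ odd (phi j q) ->
  bounded (fun x y => G0 b x y /\ phi y x = phi j q) q j.
Hypothesis Hne : forall j, Sj j != set0.

Fixpoint G k : Q -> nat -> Prop :=
  if k is k'.+1 then
    (fun q j => G k' q j /\
       (if odd k' then ~ Ffree (G k') q j else ~ bounded (G k') q j))
  else G0 b.

Lemma G_G0 k q j : G k q j -> G0 b q j.
Proof. by elim: k => [//|k IH] [/IH]. Qed.

Lemma G_dec k k' q j : k <= k' -> G k' q j -> G k q j.
Proof.
move=> hk; rewrite -(subnKC hk); elim: (k' - k) => [|d IH]; first by rewrite addn0.
by rewrite addnS => -[/IH].
Qed.

Lemma reach_phi k q j x y : reach (G k) q j x y -> phi y x <= phi j q.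
Proof.
elim=> // x0 y0 x' r IH e hx; apply: leq_trans IH.
have [hb hx0] := G_G0 (reach_H r).2; exact: P1.
Qed.

Lemma G_phi k q j : G k q j -> k <= phi j q.
Proof.
elim: k q j => [//|k IH] q j [gk hx].
have := IH _ _ gk; rewrite leq_eqVlt => /orP[/eqP ek|//].
exfalso; case: ifP hx => ok hx; apply: hx.
- move=> x y r; have h1 := reach_phi r; have h2 := IH _ _ (reach_H r).2.
  have e : phi y x = k by apply/eqP; rewrite eqn_leq h2 ek h1.
  apply/negP => xF; have := P2 (proj1 (G_G0 (reach_H r).2)) xF.
  by rewrite e ok.
- have ev : ~~ odd (phi j q) by rewrite -ek ok.
  have [N hN] := P3 (G_G0 gk) ev.
  exists N => x y r; apply: hN; apply: reach_str r => x0 y0 r0; split.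
    exact: G_G0 (reach_H r0).2.
  apply/eqP; rewrite eqn_leq (reach_phi r0) /= -ek; exact: IH _ _ (reach_H r0).2.
Qed.

Definition K := (2 * nQ A).+1.
Definition kap j : {ffun Q -> nat} :=
  [ffun q => \max_(k < K | pdec (G k q j)) nat_of_ord k].

Lemma G_K q j : ~ G K q j.
Proof.
move=> g; have := G_phi g; have := P4 q (proj1 (G_G0 g)).
by rewrite /K => h1 h2; have := leq_trans h2 h1; rewrite ltnn.
Qed.

Lemma kapP k q j : G0 b q j -> G k q j <-> k <= kap j q.
Proof.
move=> g0; rewrite ffunE; split.
- move=> gk; have hk : k < K.
    rewrite ltnNge; apply/negP => hK; apply: (@G_K q j); exact: G_dec hK gk.
  exact: (@leq_bigmax_cond _ (fun i : 'I_K => pdec (G i q j)) (fun i => nat_of_ord i)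
            (Ordinal hk) (introT (pdecP _) gk)).
- move=> hk; apply: NNPP' => ngk.
  case: k hk ngk => [_ /(_ g0)//|k hk ngk].
  have : \max_(i < K | pdec (G i q j)) nat_of_ord i <= k.
    apply/bigmax_leqP => i /pdecP gi; rewrite leqNgt; apply/negP => hi.
    by apply: ngk; apply: G_dec hi gi.
  by move=> h; have := leq_trans hk h; rewrite ltnn.
Qed.

Lemma kap_out q j : ~ G0 b q j -> kap j q = 0.
Proof.
move=> ng; rewrite ffunE; apply/eqP; rewrite -leqn0; apply/bigmax_leqP => i /pdecP gi.
by exfalso; apply: ng; exact: G_G0 gi.
Qed.

Lemma kap_le q j : kap j q <= 2 * nQ A.
Proof. by rewrite ffunE; apply/bigmax_leqP => i _; rewrite -ltnS. Qed.

Lemma G_edge k q q' j : b <= j -> q \in Sj j -> q' \in delta q (alpha j) ->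
  G k q' j.+1 -> G k q j.
Proof.
move=> hb hq e; elim: k => [|k IH]; first by move=> _; split.
move=> [gk hx]; split; first exact: IH.
case: ifP hx => _ hx hc; apply: hx.
- move=> x y r; apply: hc; exact: reach_cons (IH gk) e r.
- case: hc => N hN; exists N => x y r; apply: hN; exact: reach_cons (IH gk) e r.
Qed.

Lemma kap_edge q q' j : b <= j -> q \in Sj j -> q' \in delta q (alpha j) ->
  kap j.+1 q' <= kap j q.
Proof.
move=> hb hq e.
have g0 : G0 b q' j.+1 by split; [exact: leqW | exact: Sj_edge e].
apply/(kapP _ (conj hb hq)); apply: G_edge hb hq e _; exact/(kapP _ g0).
Qed.

Lemma kap_F q j : q \in F -> ~~ odd (kap j q).
Proof.
move=> qF; case: (Classical_Prop.classic (G0 b q j)) => g0; last by rewrite kap_out.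
apply/negP => ko.
have gk := (kapP (kap j q) g0).2 (leqnn _).
have : ~ G (kap j q).+1 q j by move/(kapP _ g0); rewrite ltnn.
apply; split => //; rewrite ko => ff; by move: (ff q j (reach0 gk)); rewrite qF.
Qed.

Lemma kap_bounded q j : G0 b q j -> ~~ odd (kap j q) -> bounded (G (kap j q)) q j.
Proof.
move=> g0 ke; apply: NNPP' => nb.
have : ~ G (kap j q).+1 q j by move/(kapP _ g0); rewrite ltnn.
apply; split; first exact/(kapP _ g0).
by rewrite (negbTE ke).
Qed.

Lemma G_sim k : forall p q j, di_sim p q -> G k p j -> q \in Sj j -> G k q j.
Proof.
elim: k => [|k IH] p q j hs; first by case=> hb _ hq; split.
case=> gk hx hq; have gq := IH _ _ _ hs gk hq; split => //.
have rs : forall x y, reach (G k) p j x y ->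
    exists2 x', reach (G k) q j x' y & di_sim x x'.
  move=> x y r; elim: r => [_|x0 y0 x' r [x1 r1 s1] e hx'].
    by exists q => //; apply: reach0.
  have [x2 e2 s2] := sim_step s1 e.
  exists x2 => //; apply: (reachS r1 e2); apply: (IH _ _ _ s2 hx').
  exact: (Sj_edge (proj2 (G_G0 (reach_H r1).2)) e2).
case: ifP hx => _ hx hc; apply: hx.
- move=> x y r; have [x' r' s'] := rs x y r; apply/negP => xF.
  by move: (hc x' y r'); rewrite (sim_F s' xF).
- case: hc => N hN; exists N => x y r; have [x' r' _] := rs x y r; exact: hN r'.
Qed.

Lemma kap_sim p q j : di_sim p q -> b <= j -> p \in Sj j -> q \in Sj j ->
  kap j p <= kap j q.
Proof.
move=> hs hb hp hq; apply/(kapP _ (conj hb hq)); apply: G_sim hs _ hq.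
exact/(kapP _ (conj hb hp)).
Qed.

Definition R j := rank (kap j).

Lemma kap_le_R q j : kap j q <= R j.
Proof. exact: leq_bigmax. Qed.

Lemma R_dec j : b <= j -> R j.+1 <= R j.
Proof.
move=> hb; apply/bigmax_leqP => q' _; case: (boolP (q' \in Sj j.+1)) => hq'.
  have [q hq e] := Sj_parent hq'; exact: leq_trans (kap_edge hb hq e) (kap_le_R _ _).
rewrite kap_out //; case=> _ h; by rewrite h in hq'.
Qed.

Lemma R_attained j : b <= j -> exists2 q, q \in Sj j & kap j q = R j.
Proof.
move=> hb; have /set0Pn [x hx] := Hne j.
have eR : R j = kap j [arg max_(i > x) kap j i] := @bigmax_eq_arg _ x xpredT (kap j) isT.
set q := [arg max_(i > x) kap j i] in eR.
case: (boolP (q \in Sj j)) => hq; first by exists q.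
exists x => //; apply/eqP; rewrite eqn_leq kap_le_R eR kap_out //.
case=> _ h; by rewrite h in hq.
Qed.


Lemma LU (H : Q -> nat -> Prop) m : b <= m ->
  (forall q j, H q j -> G0 b q j) ->
  (forall q q' j, b <= j -> q \in Sj j -> q' \in delta q (alpha j) -> H q' j.+1 -> H q j) ->
  (forall j, m <= j -> exists q, H q j) ->
  exists2 q0, H q0 m & ~ bounded H q0 m.
Proof.
move=> hbm hG hback hex.
have anc : forall d x, H x (m + d) -> exists q0, reach H q0 m x (m + d).
  elim=> [|d IH] x hx; first by exists x; rewrite addn0 in hx *; apply: reach0.
  rewrite addnS in hx *; have [hb hxS] := hG _ _ hx.
  have [x' hx' e] := Sj_parent hxS.
  have hHx' : H x' (m + d) := hback _ _ _ (leq_trans hbm (leq_addr _ _)) hx' e hx.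
  have [q0 r] := IH _ hHx'; exists q0; exact: (reachS r e hx).
apply: NNPP' => hno.
have hb : forall q, exists N, H q m -> forall x y, reach H q m x y -> y < N.
  move=> q; case: (Classical_Prop.classic (H q m)) => hq; last by exists 0.
  case: (Classical_Prop.classic (bounded H q m)) => [[N hN]|nb]; first by exists N.
  by exfalso; apply: hno; exists q.
have [Nf hNf] := fin_all_exists hb.
have [x hx] := hex (m + \max_q Nf q) (leq_addr _ _).
have [q0 r] := anc _ x hx.
have := hNf q0 (reach_H r).1 _ _ r.
rewrite ltnNge => /negP; apply; apply: leq_trans (leq_bigmax q0) (leq_addl _ _).
Qed.

Lemma G_odd_succ o q j : odd o -> G o q j ->
  exists2 q', q' \in delta q (alpha j) & G o q' j.+1.
Proof.
case: o => [//|k] /= ok [gk hx]; rewrite (negbTE ok) in hx.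
apply: NNPP' => hno.
have hb : forall q', exists N, q' \in delta q (alpha j) -> G k q' j.+1 ->
    forall x y, reach (G k) q' j.+1 x y -> y < N.
  move=> q'; case: (boolP (q' \in delta q (alpha j))) => he; last by exists 0.
  case: (Classical_Prop.classic (G k q' j.+1)) => g'; last by exists 0.
  case: (Classical_Prop.classic (bounded (G k) q' j.+1)) => [[N hN]|nb].
    by exists N.
  by exfalso; apply: hno; exists q' => //; split => //; rewrite (negbTE ok).
have [Nf hNf] := fin_all_exists hb.
apply: hx; exists (maxn j.+1 (\max_q Nf q)) => x y r.
case: (reach_front r) => [[_ ->]|[q' e r']]; first by rewrite leq_max ltnSn.
apply: leq_trans (hNf q' e (reach_H r').1 _ _ r') _.
by rewrite leq_max leq_bigmax orbT.
Qed.

Lemma G_odd_unb o q j : odd o -> G o q j -> ~ bounded (G o) q j.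
Proof.
move=> ok go.
have hp : forall d, exists x, reach (G o) q j x (j + d).
  elim=> [|d [x r]]; first by exists q; rewrite addn0; apply: reach0.
  have [x' e g'] := G_odd_succ ok (reach_H r).2.
  by exists x'; rewrite addnS; apply: (reachS r e g').
case=> N hN; have [x r] := hp N; have := hN _ _ r.
by rewrite ltnNge leq_addl.
Qed.

Lemma persist o q j : odd o -> G0 b q j -> kap j q = o ->
  forall j', j <= j' -> exists2 q', q' \in Sj j' & kap j' q' = o.
Proof.
move=> ok g0 kq j' hj'; rewrite -(subnKC hj').
elim: (j' - j) => [|d [q' hq' kq']]; first by exists q; rewrite ?addn0 //; case: g0.
have g0' : G0 b q' (j + d) by split => //; apply: leq_trans (proj1 g0) (leq_addr _ _).
have go : G o q' (j + d) by apply/(kapP _ g0'); rewrite kq'.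
have [q'' e g''] := G_odd_succ ok go.
have hq'' : q'' \in Sj (j + d).+1 := Sj_edge hq' e.
exists q''; rewrite addnS //.
have g0'' : G0 b q'' (j + d).+1 by split => //; apply: leqW (proj1 g0').
apply/eqP; rewrite eqn_leq -{1}kq' (kap_edge (proj1 g0') hq' e) /=.
exact/(kapP _ g0'').
Qed.

Section Stable.
Variable m : nat.
Hypothesis hm : b <= m.
Hypothesis hstab : forall j, m <= j -> R j = R m.

Lemma r_odd : odd (R m).
Proof.
apply: NNPP' => /negP hev.
have hex : forall j, m <= j -> exists q, G (R m) q j.
  move=> j hj; have [q hq kq] := R_attained (leq_trans hm hj); exists q.
  by apply/(kapP _ (conj (leq_trans hm hj) hq)); rewrite kq hstab.
have [q0 g0 nb] := @LU (G (R m)) m hm (fun q j g => G_G0 g)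
    (fun q q' j hb hq e g => G_edge hb hq e g) hex.
have g00 := G_G0 g0.
have kq : kap m q0 = R m by apply/eqP; rewrite eqn_leq kap_le_R ((kapP _ g00).1 g0).
apply: nb; rewrite -kq; apply: kap_bounded g00 _; by rewrite kq.
Qed.

Lemma odd_exists o : odd o -> o < R m -> exists x y, G0 b x y /\ kap y x = o.
Proof.
move=> ok hor; apply: NNPP' => hno.
have all : forall d q j, G o q j -> G (o + d) q j.
  elim=> [|d IH] q j go; first by rewrite addn0.
  rewrite addnS /=; split; first exact: IH.
  case: ifP => _ hc.
  - have ff : Ffree (G o) q j.
      by move=> x y r; apply: hc; apply: reach_mono r; exact: IH.
    apply: hno; exists q, j; split; first exact: G_G0 go.
    have g0 := G_G0 go.
    apply/eqP; rewrite eqn_leq ((kapP _ g0).1 go) andbT leqNgt; apply/negP.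
    move/(kapP _ g0) => [_]; rewrite ok; exact.
  - apply: (G_odd_unb ok go); case: hc => N hN; exists N => x y r; apply: hN.
    by apply: reach_mono r; exact: IH.
have [q hq kq] := R_attained hm.
have g0 : G0 b q m by [].
have go : G o q m by apply/(kapP _ g0); rewrite kq ltnW.
have hoK : o <= K.
  apply: leq_trans (ltnW hor) _; rewrite -kq; apply: leq_trans (kap_le _ _) _.
  exact: leqnSn.
have := all (K - o) _ _ go; rewrite subnKC //; exact: G_K.
Qed.

Lemma tight_level : exists2 L, m <= L & forall j, L <= j -> forall o, odd o -> o < R m ->
  exists2 q, q \in Sj j & kap j q = o.
Proof.
suff: forall c, exists2 L, m <= L & forall j, L <= j -> forall o, o < c -> odd o ->
    o < R m -> exists2 q, q \in Sj j & kap j q = o.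
  case/(_ (R m)) => L hL hj; exists L => // j hj' o ok hor; exact: hj.
elim=> [|c [L hL IH]]; first by exists m.
case: (boolP (odd c && (c < R m))) => [/andP[ok hcr]|hno].
- have [x [y [g0 kx]]] := odd_exists ok hcr.
  exists (maxn L y); first by rewrite leq_max hL.
  move=> j hj o; rewrite ltnS leq_eqVlt => /orP[/eqP->|ho] ok' hor.
    apply: (persist ok g0 kx); exact: leq_trans (leq_maxr _ _) hj.
  apply: IH => //; exact: leq_trans (leq_maxl _ _) hj.
- exists L => // j hj o; rewrite ltnS leq_eqVlt => /orP[/eqP->|ho] ok' hor.
    by move: hno; rewrite ok' hor.
  exact: IH.
Qed.


Section Run.
Variable L : nat.
Hypothesis hL : m <= L.
Hypothesis htl : forall j, L <= j -> forall o, odd o -> o < R m ->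
  exists2 q, q \in Sj j & kap j q = o.

Lemma R_at j : L <= j -> rank (kap j) = R m.
Proof. by move=> hj; apply: hstab; apply: leq_trans hL hj. Qed.

Lemma tight_at j : L <= j -> tight (Sj j) (kap j).
Proof.
move=> hj; have hmj := leq_trans hL hj; split.
- by rewrite R_at // r_odd.
- move=> k ok; rewrite R_at // leq_eqVlt => /orP[/eqP->|hk]; last exact: htl.
  have [q hq kq] := R_attained (leq_trans hm hmj); exists q => //; by rewrite kq hstab.
- move=> q hq; apply: kap_out; case=> _ h; by rewrite h in hq.
Qed.

Lemma tight_T S1 (f : {ffun Q -> nat}) : tight S1 f -> tight [set: Q] f.
Proof.
case=> h1 h2 h3; split => //.
  move=> k ok hk; have [s _ hs] := h2 k ok hk; by exists s.
by move=> q; rewrite inE.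
Qed.

Definition M := L.+1.

Definition ostep (d : nat) (x : {set Q} * nat) : {set Q} * nat :=
  let: (O1, i) := x in
    if O1 == set0 then
      (Sj (M + d.+1) :&: preimg (kap (M + d.+1)) ((i + 2) %% (R m).+1),
       (i + 2) %% (R m).+1)
    else (post O1 (alpha (M + d)) :&: preimg (kap (M + d.+1)) i, i).

Lemma ostepE d O1 i : ostep d (O1, i) =
    if O1 == set0 then
      (Sj (M + d.+1) :&: preimg (kap (M + d.+1)) ((i + 2) %% (R m).+1),
       (i + 2) %% (R m).+1)
    else (post O1 (alpha (M + d)) :&: preimg (kap (M + d.+1)) i, i).
Proof. by []. Qed.

Fixpoint oi (d : nat) : {set Q} * nat :=
  if d is d'.+1 then ostep d' (oi d') else (set0, 0).

Lemma oiS d : oi d.+1 = ostep d (oi d).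
Proof. by []. Qed.

Lemma oi_inv d : [/\ ~~ odd (oi d).2, (oi d).2 < (R m).+1 &
  (oi d).1 \subset Sj (M + d) :&: preimg (kap (M + d)) (oi d).2].
Proof.
elim: d => [|d]; first by rewrite /= sub0set.
rewrite oiS; case E: (oi d) => [O1 i] [ie ir isub]; rewrite ostepE.
case: ifP => _; split.
- rewrite odd_mod; first by rewrite oddD addbF.
  by rewrite /= r_odd.
- by rewrite ltn_pmod.
- exact: subxx.
- exact: ie.
- exact: ir.
- apply: setSI; rewrite addnS; apply: post_sub.
  exact: subset_trans isub (subsetIl _ _).
Qed.


Definition rho (j : nat) : sstate A :=
  if j < M then inl (Sj j)
  else inr (Sj j, (oi (j - M)).1, kap j, (oi (j - M)).2).

Lemma rho_M d : rho (M + d) = inr (Sj (M + d), (oi d).1, kap (M + d), (oi d).2).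
Proof. by rewrite /rho ltnNge leq_addr /= addKn. Qed.

Lemma rho_lt j : j < M -> rho j = inl (Sj j).
Proof. by rewrite /rho => ->. Qed.

Lemma LM d : L <= M + d.
Proof. by rewrite /M addSn ltnW // ltnS leq_addr. Qed.

Lemma bM d : b <= M + d.
Proof. exact: leq_trans hm (leq_trans hL (LM d)). Qed.

Lemma P_at d : inQ2di (Sj (M + d), (oi d).1, kap (M + d), (oi d).2).
Proof.
have [ie ir isub] := oi_inv d.
have ht := tight_at (LM d).
split.
  split => //.
  - split; last exact: tight_T ht.
    split; [move=> q; exact: kap_le | move=> q; exact: kap_F].
  - have hr : R m <= 2 * nQ A.
      have [q _ <-] := R_attained hm; exact: kap_le.
    have hro := r_odd.
    have hir : (oi d).2 < R m.
      rewrite ltn_neqAle -ltnS ir andbT; apply/eqP => e.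
      by move: ie; rewrite e hro.
    have : R m != 2 * nQ A by apply/eqP => e; move: hro; rewrite e mul2n odd_double.
    move=> hne2; have hr' : R m < 2 * nQ A by rewrite ltn_neqAle hne2 hr.
    exact: leq_ltn_trans hir hr'.
move=> [p [q [hp hq hs hlt]]].
by have := kap_sim hs (bM d) hp hq; rewrite leqNgt hlt.
Qed.

Lemma rho_trans j : strans (@inQ2di _ A) (rho j) (alpha j) (rho j.+1).
Proof.
case: (ltnP j.+1 M) => hj.
  by rewrite !rho_lt // ltnW.
case: (ltnP j M) => hj'.
  have eM : j.+1 = M by apply/eqP; rewrite eqn_leq hj hj'.
  rewrite rho_lt //; have := rho_M 0; rewrite addn0 -eM => ->.
  have := P_at 0; rewrite addn0 -eM /= => hP.
  split => //; split => //; split => //; split => //.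
  by have := tight_at (LM 0); rewrite addn0 -eM.
rewrite -(subnKC hj') -addnS !rho_M.
set d := j - M.
have hP := P_at d; have hP' := P_at d.+1.
rewrite oiS; case E: (oi d) hP hP' => [O1 i]; rewrite oiS E ostepE => hP hP'.
split => //; split => //; split; first by rewrite addnS.
split.
  move=> q q' hq e; rewrite addnS; exact: kap_edge (bM d) hq e.
split; first by rewrite (R_at (LM d)) (R_at (LM d.+1)).
split; first exact: tight_at (LM d.+1).
rewrite (R_at (LM d.+1)).
case: eqP => hO.
  by left.
by right; split => //; apply/eqP.
Qed.


Lemma oi_empty D : exists2 d, D <= d & (oi d).1 = set0.
Proof.
apply: NNPP' => hno.
have hne : forall d, D <= d -> (oi d).1 != set0.
  by move=> d hd; apply/eqP => he; apply: hno; exists d.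
have step : forall d, D <= d -> oi d.+1 =
    (post (oi d).1 (alpha (M + d)) :&: preimg (kap (M + d.+1)) (oi d).2, (oi d).2).
  move=> d hd; rewrite oiS; have := hne d hd; case: (oi d) => [O1 i] hO.
  by rewrite ostepE; move: hO => /= hO; rewrite (negbTE hO).
have icst : forall k, (oi (D + k)).2 = (oi D).2.
  elim=> [|k IH]; first by rewrite addn0.
  by rewrite addnS step ?leq_addr.
set e := (oi D).2.
pose H := fun x y => G0 b x y /\ kap y x = e.
have inO : forall d x, x \in (oi d).1 -> x \in Sj (M + d) /\ kap (M + d) x = (oi d).2.
  move=> d x hx; have [_ _ isub] := oi_inv d; have := subsetP isub x hx.
  by rewrite !inE => /andP[-> /eqP].
have anc : forall k x, x \in (oi (D + k)).1 ->
    exists2 q0, q0 \in (oi D).1 & reach H q0 (M + D) x (M + (D + k)).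
  elim=> [|k IH] x hx.
    rewrite addn0 in hx *; exists x => //; apply: reach0.
    have [h1 h2] := inO _ _ hx; split => //; exact: (conj (bM D) h1).
  have [hxS hxk] := inO _ _ hx.
  move: hx; rewrite addnS step ?leq_addr // => /setIP[/bigcupP[x' hx' e'] _].
  have [q0 hq0 r] := IH x' hx'; exists q0 => //.
  have ic := icst k.+1; rewrite addnS in ic.
  rewrite !addnS in hxS hxk; rewrite ic in hxk; rewrite addnS.
  apply: (reachS r e'); split => //; split => //; apply: leqW; exact: bM.
have hbd : forall q, exists N, q \in (oi D).1 ->
    forall x y, reach H q (M + D) x y -> y < N.
  move=> q; case: (boolP (q \in (oi D).1)) => hq; last by exists 0.
  have [hS hk] := inO _ _ hq.
  have g0 : G0 b q (M + D) := conj (bM D) hS.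
  have [ie _ _] := oi_inv D.
  have hke : ~~ odd (kap (M + D) q) by rewrite hk.
  have [N hN] := kap_bounded g0 hke.
  exists N => _ x y r; apply: hN; apply: reach_mono r => x0 y0 [g0' k0].
  by apply/(kapP _ g0'); rewrite k0 hk.
have [Nf hNf] := fin_all_exists hbd.
have /set0Pn [x hx] := hne (D + \max_q Nf q) (leq_addr _ _).
have [q0 hq0 r] := anc _ x hx.
have := hNf q0 hq0 _ _ r; rewrite ltnNge => /negP; apply.
by apply: leq_trans (leq_bigmax q0) _; rewrite addnA leq_addl.
Qed.

Lemma run_di : rlang (B_S_di A) alpha.
Proof.
exists rho; split; first by rewrite /= /sinit rho_lt.
split; first exact: rho_trans.
move=> N; have [d hd hO] := oi_empty N; exists (M + d); split.
  exact: leq_trans hd (leq_addl _ _).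
right; exists (Sj (M + d)), (kap (M + d)), (oi d).2.
rewrite rho_M hO; split => //; have := P_at d; by rewrite hO.
Qed.


End Run.
End Stable.

Lemma DAG_final : rlang (B_S_di A) alpha.
Proof.
have [m hm hs] := @stab R b R_dec.
have [L hL htl] := tight_level hm.
exact: (run_di hm hs hL htl).
Qed.

End DAG.

Section FromRun.
Variable rho0 : nat -> sstate A.
Hypothesis h0 : rho0 0 = inl (binit A).
Hypothesis htr : forall i, strans (@inQ2 _ A) (rho0 i) (alpha i) (rho0 i.+1).
Hypothesis hacc : forall N, exists m, N <= m /\ sacc (@inQ2 _ A) (rho0 m).
Hypothesis Hne : forall j, Sj j != set0.

Definition sS (x : sstate A) : {set Q} :=
  match x with inl S1 => S1 | inr (S1, _, _, _) => S1 end.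
Definition sO (x : sstate A) : {set Q} :=
  match x with inl _ => set0 | inr (_, O1, _, _) => O1 end.
Definition sF (x : sstate A) : {ffun Q -> nat} :=
  match x with inl _ => [ffun => 0] | inr (_, _, f, _) => f end.
Definition sI (x : sstate A) : nat :=
  match x with inl _ => 0 | inr (_, _, _, i) => i end.

Lemma sS_run j : sS (rho0 j) = Sj j.
Proof.
elim: j => [|j IH]; first by rewrite h0.
have := htr j; case: (rho0 j) IH => [S1|[[[S1 O1] f1] i1]] /= IH;
  case: (rho0 j.+1) => [S2|[[[S2 O2] f2] i2]] //=.
- by move=> ->; rewrite IH.
- by case=> _ [-> _]; rewrite IH.
- by case=> _ [_ [-> _]]; rewrite IH.
Qed.

Lemma exists_b : exists b, exists x, rho0 b = inr x.
Proof.
have [t [_ [h|[S1 [f [i [h _]]]]]]] := hacc 0.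
  have := sS_run t; rewrite h /= => e; by move: (Hne t); rewrite -e eqxx.
by exists t, (S1, set0, f, i).
Qed.


Section WithB.
Variable b : nat.
Hypothesis hb : exists x, rho0 b = inr x.

Lemma inr_after j : b <= j -> exists x, rho0 j = inr x.
Proof.
elim: j => [|j IH]; first by rewrite leqn0 => /eqP <-.
rewrite leq_eqVlt => /orP [/eqP <- // | hj].
have [x hx] := IH hj; have := htr j; rewrite hx.
case: x hx => [[[S1 O1] f1] i1] hx.
by case: (rho0 j.+1) => [S2|y] //; exists y.
Qed.

Local Notation Oj j := (sO (rho0 j)).
Local Notation phi j := (sF (rho0 j)).
Local Notation Ij j := (sI (rho0 j)).

Lemma rho_eq j : b <= j -> rho0 j = inr (Sj j, Oj j, phi j, Ij j).
Proof.
move=> hj; have [[[[S1 O1] f1] i1] hx] := inr_after hj.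
by have := sS_run j; rewrite hx /= => ->.
Qed.

Lemma trb j : b <= j ->
  strans (@inQ2 _ A) (inr (Sj j, Oj j, phi j, Ij j)) (alpha j)
    (inr (Sj j.+1, Oj j.+1, phi j.+1, Ij j.+1)).
Proof. by move=> hj; rewrite -(rho_eq hj) -(rho_eq (leqW hj)). Qed.

Lemma inQ2_at j : b <= j -> inQ2 (Sj j, Oj j, phi j, Ij j).
Proof. by move=> hj; case: (trb hj). Qed.

Lemma Q1 q q' j : b <= j -> q \in Sj j -> q' \in delta q (alpha j) ->
  phi j.+1 q' <= phi j q.
Proof. by move=> hj hq e; case: (trb hj) => _ [_ [_ [h _]]]; apply: h. Qed.

Lemma Q2 q j : b <= j -> q \in F -> ~~ odd (phi j q).
Proof. by move=> hj qF; case: (inQ2_at hj) => [[[_ h] _] _ _ _ _]; apply: h. Qed.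

Lemma Q4 q j : b <= j -> phi j q <= 2 * nQ A.
Proof. by move=> hj; case: (inQ2_at hj) => [[[h _] _] _ _ _ _]; apply: h. Qed.

Lemma rank_const j : b <= j -> rank (phi j) = rank (phi b).
Proof.
move=> hj; rewrite -(subnKC hj); elim: (j - b) => [|d IH]; first by rewrite addn0.
by rewrite addnS -IH; case: (trb (leq_addr d b)) => _ [_ [_ [_ [h _]]]].
Qed.

Definition r0 := rank (phi b).

Lemma r0_odd : odd r0.
Proof. by case: (inQ2_at (leqnn b)) => _ [h _ _] _ _ _. Qed.

Lemma O_empty_step j : b <= j -> Oj j = set0 ->
  Ij j.+1 = (Ij j + 2) %% r0.+1 /\ Oj j.+1 = Sj j.+1 :&: preimg (phi j.+1) (Ij j.+1).
Proof.
move=> hj hO; case: (trb hj) => _ [_ [_ [_ [_ [_ [[_ [h1 h2]]|[h _]]]]]]].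
  by split => //; rewrite h1 rank_const ?leqW.
by rewrite hO eqxx in h.
Qed.

Lemma O_ne_step j : b <= j -> Oj j != set0 ->
  Ij j.+1 = Ij j /\ Oj j.+1 = post (Oj j) (alpha j) :&: preimg (phi j.+1) (Ij j).
Proof.
move=> hj hO; case: (trb hj) => _ [_ [_ [_ [_ [_ [[h _]|[_ h]]]]]]] //.
by rewrite h eqxx in hO.
Qed.

Lemma O_inf N : exists2 t, N <= t & Oj t = set0.
Proof.
have [t [ht [h|[S1 [f [i [h _]]]]]]] := hacc (maxn N b).
  by move: h; rewrite (rho_eq (leq_trans (leq_maxr _ _) ht)).
exists t; first exact: leq_trans (leq_maxl _ _) ht.
by move: h; rewrite (rho_eq (leq_trans (leq_maxr _ _) ht)) => -[_ ->].
Qed.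

Lemma first_empty s : exists u, [/\ s <= u, Oj u = set0 &
  forall y, s <= y -> y < u -> Oj y != set0].
Proof.
have ex : exists u, (s <= u) && (Oj u == set0).
  by have [t ht hO] := O_inf s; exists t; rewrite ht hO eqxx.
case: (ex_minnP ex) => u /andP[hu /eqP hO] hmin; exists u; split => //.
move=> y hy hyu; apply/negP => /eqP hy0.
by have := hmin y; rewrite hy hy0 eqxx => /(_ isT); rewrite leqNgt hyu.
Qed.

Lemma I_const s u : b <= s -> (forall y, s <= y -> y < u -> Oj y != set0) ->
  forall d, s + d <= u -> Ij (s + d) = Ij s.
Proof.
move=> hs hne; elim=> [|d IH] hd; first by rewrite addn0.
rewrite addnS in hd *; rewrite (O_ne_step _ (hne _ (leq_addr _ _) hd)).1.
  exact: IH (ltnW hd).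
exact: leq_trans hs (leq_addr _ _).
Qed.

Lemma cyc k s : b <= s -> Oj s = set0 ->
  exists s', [/\ s <= s', Oj s' = set0 & Ij s'.+1 = (Ij s.+1 + 2 * k) %% r0.+1].
Proof.
move=> hs hOs; elim: k => [|k [s' [hss' hOs' hI]]].
  exists s; split => //; rewrite muln0 addn0 modn_small //.
  by rewrite (O_empty_step hs hOs).1 ltn_pmod.
have [u [hu hOu hbet]] := first_empty s'.+1.
have hbs' : b <= s' := leq_trans hs hss'.
have hc := @I_const s'.+1 u (leqW hbs') hbet (u - s'.+1); rewrite subnKC // in hc.
exists u; split => //.
  exact: leq_trans hss' (ltnW hu).
rewrite (O_empty_step (leq_trans hbs' (ltnW hu)) hOu).1 (hc (leqnn _)) hI.
by rewrite modnDml mulnS (addnC 2) addnA.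
Qed.

Lemma Q3 q j : G0 b q j -> ~~ odd (phi j q) ->
  bounded (fun x y => G0 b x y /\ phi y x = phi j q) q j.
Proof.
move=> [hbj hq] he; set e := phi j q.
have er : e < r0.+1 by rewrite ltnS /r0 -(rank_const hbj); exact: leq_bigmax.
have [s [hs hOs _]] := first_empty j.
have hbs : b <= s := leq_trans hbj hs.
have [hi0 hi0r] := O_empty_step hbs hOs.
set i0 := Ij s.+1.
have i0r : i0 < r0.+1 by rewrite /i0 hi0 ltn_pmod.
have i0e : ~~ odd i0 by case: (inQ2_at (leqW hbs)) => _ _ h _ _.
set k := (r0.+1 - i0 + e)./2.
have hk : i0 + 2 * k = r0.+1 + e.
  have hev : odd (r0.+1 - i0 + e) = false.
    rewrite oddD oddB ?(ltnW i0r) //= r0_odd /=.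
    by rewrite (negbTE i0e) (negbTE he).
  have := odd_double_half (r0.+1 - i0 + e); rewrite hev add0n => h2.
  by rewrite mul2n /k h2 addnA subnKC // ltnW.
have [t [hst hOt hIt]] := cyc k hbs hOs.
rewrite -/i0 hk modnDl modn_small // in hIt.
have hbt : b <= t := leq_trans hbs hst.
have [u [hu hOu hbet]] := first_empty t.+1.
pose H := fun x y => G0 b x y /\ phi y x = e.
have claim : forall d, t.+1 + d <= u -> Ij (t.+1 + d) = e /\
    forall x, reach H q j x (t.+1 + d) -> x \in Oj (t.+1 + d).
  elim=> [|d IH] hd.
    rewrite addn0; split => // x r; have [_ [[_ hx] hxe]] := reach_H r.
    by rewrite (O_empty_step hbt hOt).2 hIt !inE hx hxe eqxx.
  have hd' : t.+1 + d <= u by apply: leq_trans _ hd; rewrite addnS.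
  have [IH1 IH2] := IH hd'.
  have hlt : t.+1 + d < u by rewrite -addnS.
  have htd : t <= t.+1 + d := leq_trans (leqnSn t) (leq_addr d _).
  have hbd : b <= t.+1 + d := leq_trans hbt htd.
  have [hI hO'] := O_ne_step hbd (hbet _ (leq_addr _ _) hlt).
  rewrite addnS; split; first by rewrite hI IH1.
  move=> x r.
  have hjd : j <= t.+1 + d := leq_trans hs (leq_trans hst htd).
  have [x' r' e'] := reach_back r hjd.
  have hx'O := IH2 x' r'.
  have [_ [_ hxe]] := reach_H r.
  rewrite hO' !inE IH1 hxe eqxx andbT; apply/bigcupP; by exists x'.
exists u => x y r; rewrite ltnNge; apply/negP => hy.
have hju : j <= u by apply: leq_trans hs (leq_trans hst (ltnW hu)).
have [x' r'] := reach_prefix r (introT andP (conj hju hy)).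
have := claim (u - t.+1); rewrite subnKC // => /(_ (leqnn _)) [_ /(_ x' r')].
by rewrite hOu inE.
Qed.

End WithB.

Lemma from_run : rlang (B_S_di A) alpha.
Proof.
have [b hb] := exists_b.
exact: (@DAG_final b (fun j => sF (rho0 j)) (Q1 hb) (Q2 hb) (Q4 hb) (Q3 hb) Hne).
Qed.

End FromRun.

Lemma Sj_empty j0 k : Sj j0 = set0 -> j0 <= k -> Sj k = set0.
Proof.
move=> h0 hk; rewrite -(subnKC hk); elim: (k - j0) => [|d IH]; first by rewrite addn0.
rewrite addnS /= IH; apply/eqP; rewrite -subset0; apply/subsetP => x /bigcupP [q].
by rewrite inE.
Qed.

Lemma S_to_di : rlang (B_S A) alpha -> rlang (B_S_di A) alpha.
Proof.
case=> rho0 [h0 [htr hacc]].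
case: (Classical_Prop.classic (exists j, Sj j = set0)) => [[j0 hj0]|hne].
  exists (fun j => inl (Sj j)); split => //; split => // N.
  exists (maxn N j0); split; first exact: leq_maxl.
  by left; rewrite (Sj_empty hj0 (leq_maxr _ _)).
apply: (@from_run rho0) => // j; apply/eqP => e; apply: hne; by exists j.
Qed.

End Main.

Lemma strans_mono (Sigma : finType) (A : buchi Sigma) x a y :
  strans (@inQ2di _ A) x a y -> strans (@inQ2 _ A) x a y.
Proof.
case: x => [S1|[[[S1 O1] f1] i1]]; case: y => [S2|[[[S2 O2] f2] i2]] //=.
  by case=> -[hP _] rest; split.
by case=> -[hP _] [[hP' _] rest]; split; [|split].
Qed.

Lemma sacc_mono (Sigma : finType) (A : buchi Sigma) x :
  sacc (@inQ2di _ A) x -> sacc (@inQ2 _ A) x.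
Proof.
case=> [->|[S1 [f [i [-> [hP _]]]]]]; first by left.
by right; exists S1, f, i.
Qed.

Theorem lemma2 (Sigma : finType) (A : buchi Sigma) :
  0 < #|Sigma| -> complete A ->
  forall alpha : word Sigma, rlang (B_S_di A) alpha <-> rlang (B_S A) alpha.
Proof.
move=> _ hc alpha; split; last exact: S_to_di.
case=> rho [h0 [htr hacc]]; exists rho; split => //; split.
  move=> i; exact: strans_mono (htr i).
move=> N; have [m [hm ha]] := hacc N; exists m; split => //; exact: sacc_mono.
Qed.
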